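(* Let $(G,k)$ be an instance, let $v$ be a large-sparse vertex, and let $B\subseteq V\setminus\{v\}$ with $|B|\le 2k$ be such that $G-B$ has no cycle passing through $v$. Let $\mathcal{C}_{\mathrm{tree}}$ (resp. $\mathcal{C}_{\mathrm{nontree}}$) be the family of connected components of $G-v-B$ that contain a neighbor of $v$ and are trees (resp. are not trees). Assume $|\mathcal{C}_{\mathrm{tree}}|\ge 4k$ and every $C\in\mathcal{C}_{\mathrm{tree}}$ contains a vertex adjacent to some vertex of $B$. Let $B'\subseteq B$ and $\mathcal{C}'\subseteq\mathcal{C}_{\mathrm{tree}}$ be nonempty with $|B'|\le k$ such that (a) every vertex of $B$ adjacent to a vertex of some $C\in\mathcal{C}'$ lies in $B'$, and (b) there is a map assigning to each $C\in\mathcal{C}'$ a vertex of $B'$ adjacent to some vertex of $C$, such that every vertex of $B'$ is assigned to exactly two members of $\mathcal{C}'$. Let $G'$ be obtained from $G$ by deleting all edges between $v$ and $\bigcup_{C\in\mathcal{C}'}V(C)$ and then joining $v$ to each vertex of $B'$ by a double edge (two parallel edges). Then $(G,k)$ is a yes-instance if and only if $(G',k)$ is a yes-instance.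
   Context: Graphs are undirected, without self-loops, possibly with multi-edges. $N(v)$ is the set of vertices adjacent to $v$; $\rho(v)$ is the number of unordered pairs $\{u_1,u_2\}\subseteq N(v)$ joined by at least one edge. A vertex $v$ is large-sparse if $|N(v)|>7k$ and $\rho(v)\le |N(v)|(|N(v)|-1)/4$. A vertex set induces a clique if between any two distinct vertices there is exactly one edge, and a tree if it is connected and acyclic (two parallel edges form a cycle). A feasible solution is $X\subseteq V$, $|X|\le k$, with every component of $G-X$ a clique or a tree; $(G,k)$ is a yes-instance if a feasible solution exists. *)

(* Defs.v *)
(* Multigraphs on a finite vertex type V are given by an
   edge-multiplicity function m : V -> V -> nat (symmetric, loopless). *)
From mathcomp Require Import all_boot.
Set Implicit Arguments. Unset Strict Implicit. Unset Printing Implicit Defensive.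

Section MultiGraph.
Variable V : finType.

Definition mgraph := V -> V -> nat.

Definition is_mgraph (m : mgraph) : Prop :=
  (forall x y, m x y = m y x) /\ (forall x, m x x = 0).

Definition adj (m : mgraph) (x y : V) : bool := 0 < m x y.

Definition nbhd (m : mgraph) (v : V) : {set V} := [set u | adj m v u].

Definition rho (m : mgraph) (v : V) : nat :=
  #|[set A : {set V} | (A \subset nbhd m v) &&
       [exists x, exists y, (x != y) && (A == [set x; y]) && adj m x y]]|.

(* |N(v)| > 7k and rho(v) <= |N(v)|(|N(v)|-1)/4  (the latter multiplied by 4) *)
Definition large_sparse (m : mgraph) (k : nat) (v : V) : Prop :=
  7 * k < #|nbhd m v| /\ 4 * rho m v <= #|nbhd m v| * (#|nbhd m v| - 1).

(* A cycle of the subgraph induced by S: either two distinct vertices joined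
   by at least two parallel edges, or at least three distinct vertices
   forming a closed walk. *)
Definition is_cycle (m : mgraph) (S : {set V}) (c : seq V) : bool :=
  [&& uniq c, all (fun x => x \in S) c &
      match c with
      | [:: x; y] => 1 < m x y
      | _ => (2 < size c) && path.cycle (adj m) c
      end].

Definition restr (m : mgraph) (S : {set V}) : rel V :=
  fun x y => [&& x \in S, y \in S & adj m x y].

Definition connected_set (m : mgraph) (S : {set V}) : bool :=
  [forall x in S, forall y in S, connect (restr m S) x y].

Definition induces_clique (m : mgraph) (S : {set V}) : Prop :=
  forall x y, x \in S -> y \in S -> x != y -> m x y = 1.

Definition induces_tree (m : mgraph) (S : {set V}) : Prop :=
  S != set0 /\ connected_set m S /\ ~ (exists c, is_cycle m S c).

(* C is (the vertex set of) a connected component of G - X *)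
Definition is_comp (m : mgraph) (X C : {set V}) : Prop :=
  [/\ C != set0, [disjoint C & X], connected_set m C &
      forall x y, x \in C -> y \notin C -> y \notin X -> ~~ adj m x y].

Definition feasible (m : mgraph) (k : nat) (X : {set V}) : Prop :=
  #|X| <= k /\
  forall C, is_comp m X C -> induces_clique m C \/ induces_tree m C.

Definition yes_instance (m : mgraph) (k : nat) : Prop :=
  exists X, feasible m k X.

Definition in_Ctree (m : mgraph) (v : V) (B C : {set V}) : Prop :=
  [/\ is_comp m (v |: B) C, (exists u, u \in C /\ adj m v u) & induces_tree m C].

Definition modify (m : mgraph) (v : V) (C' : {set {set V}}) (B' : {set V})
  : mgraph :=
  fun x y =>
    let U := \bigcup_(C in C') C in
    if ((x == v) && (y \in U)) || ((y == v) && (x \in U)) then 0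
    else if ((x == v) && (y \in B')) || ((y == v) && (x \in B'))
         then m x y + 2
         else m x y.

End MultiGraph.

(* Main.v *)
Require Import Defs.
From mathcomp Require Import all_boot.
From mathcomp Require Import zify.
From Stdlib Require Import Lia.
Set Implicit Arguments. Unset Strict Implicit. Unset Printing Implicit Defensive.


Lemma path_closed (T : eqType) (r : rel T) (P : pred T) x p :
  path r x p -> P x -> (forall a b, P a -> r a b -> P b) -> all P p.
Proof.
elim: p x => //= y p IH x /andP[rxy pp] Px H.
have Py : P y by exact: H rxy.
by rewrite Py (IH y).
Qed.

Lemma path_same (T : eqType) (r : rel T) (P Q : pred T) x p :
  path r x p -> all Q (x :: p) ->
  (forall a b, Q a -> Q b -> r a b -> P a = P b) ->
  all (fun y => P y == P x) p.
Proof.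
elim: p x => //= y p IH x /andP[rxy pp] /and3P[Qx Qy Qp] H.
have e : P y = P x by symmetry; exact: H rxy.
rewrite e eqxx /=.
have := IH y pp; rewrite /= Qy Qp => /(_ isT H).
by rewrite e.
Qed.

Lemma path_restr_all (V : finType) (m : mgraph V) S x p :
  path (restr m S) x p -> all (fun y => y \in S) p.
Proof.
elim: p x => //= y p IH x /andP[/and3P[_ yS _] pp]; by rewrite yS (IH y).
Qed.

Lemma path_restr_adj (V : finType) (m : mgraph V) S x p :
  path (restr m S) x p -> path (adj m) x p.
Proof. by apply: sub_path => a b /and3P[]. Qed.

Lemma connect_upath (V : finType) (m : mgraph V) S x y :
  connect (restr m S) x y ->
  exists p, [/\ path (restr m S) x p, uniq (x :: p) & last x p = y].
Proof.
move=> /connectP[p pp ->].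
case: (shortenP pp) => p' pp' up' _.
by exists p'.
Qed.

Lemma adj_sym (V : finType) (m : mgraph V) : is_mgraph m -> forall x y, adj m x y = adj m y x.
Proof. by move=> [sm _] x y; rewrite /adj sm. Qed.

Lemma adj_irr (V : finType) (m : mgraph V) : is_mgraph m -> forall x, adj m x x = false.
Proof. by move=> [_ lm] x; rewrite /adj lm. Qed.

Lemma is_cycle_cyc (V : finType) (m : mgraph V) S c :
  is_mgraph m -> is_cycle m S c -> path.cycle (adj m) c.
Proof.
move=> G /and3P[_ _].
case: c => [|x [|y [|z c]]] //=.
move=> H; rewrite /adj andbT (proj1 G y x).
by apply/andP; split; apply: leq_trans H.
Qed.

Lemma is_cycle_sub (V : finType) (m : mgraph V) (S T : {set V}) c :
  is_cycle m S c -> all (fun y => y \in T) c -> is_cycle m T c.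
Proof. by move=> /and3P[u _ H] a; rewrite /is_cycle u a H. Qed.

Lemma is_cycle_all (V : finType) (m : mgraph V) S c :
  is_cycle m S c -> all (fun y => y \in S) c.
Proof. by case/and3P. Qed.

Definition agree (V : finType) (m m' : mgraph V) (S : {set V}) :=
  forall x y, x \in S -> y \in S -> m x y = m' x y.

Lemma is_cycle_agree (V : finType) (m m' : mgraph V) S c :
  agree m m' S -> is_cycle m S c -> is_cycle m' S c.
Proof.
move=> ag /and3P[u a H]; rewrite /is_cycle u a /=.
have E : path.cycle (adj m) c = path.cycle (adj m') c.
  by apply: (@eq_in_cycle _ (fun x => x \in S)) => // p q pS qS; rewrite /adj ag.
case: c u a H E => [|x [|y [|z c]]] // u a.
  by move: a => /= /and3P[xS yS _]; rewrite ag.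
by move=> H E; rewrite -E.
Qed.

Lemma conn_get (V : finType) (m : mgraph V) S x y :
  connected_set m S -> x \in S -> y \in S -> connect (restr m S) x y.
Proof.
by move=> /forallP/(_ x)/implyP H xS yS; move: (H xS) => /forallP/(_ y)/implyP/(_ yS).
Qed.

Lemma comp_notX (V : finType) (m : mgraph V) (X E : {set V}) y :
  is_comp m X E -> y \in E -> y \notin X.
Proof.
case=> _ d _ _ yE; apply/negP => yX.
by move: d; rewrite disjoint_subset => /subsetP/(_ y yE); rewrite inE yX.
Qed.

Lemma comp_step (V : finType) (m : mgraph V) (X E : {set V}) a b :
  is_comp m X E -> a \in E -> adj m a b -> b \notin X -> b \in E.
Proof.
case=> _ _ _ H aE ab bX; apply/negPn/negP => bE.
by move: (H a b aE bE bX); rewrite ab.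
Qed.

Lemma comp_sub (V : finType) (m : mgraph V) (X E S : {set V}) x :
  is_comp m X E -> (forall y, y \in S -> y \notin X) -> connected_set m S ->
  x \in S -> x \in E -> {subset S <= E}.
Proof.
move=> cE SX cS xS xE y yS.
have /connectP[p pp ->] := conn_get cS xS yS.
move: pp; case/lastP: p => // q z pp.
have : all (fun z => z \in E) (rcons q z).
  apply: (path_closed pp xE) => a b aE /and3P[_ bS ab].
  exact: comp_step cE aE ab (SX _ bS).
by rewrite last_rcons all_rcons => /andP[].
Qed.

Lemma comp_unique (V : finType) (m : mgraph V) (X C1 C2 : {set V}) y :
  is_comp m X C1 -> is_comp m X C2 -> y \in C1 -> y \in C2 -> C1 = C2.
Proof.
move=> c1 c2 y1 y2; apply/setP/subset_eqP/andP; split; apply/subsetP.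
- apply: (comp_sub c2 _ _ y1 y2); [by move=> z; apply: comp_notX c1| by case: c1].
- apply: (comp_sub c1 _ _ y2 y1); [by move=> z; apply: comp_notX c2| by case: c2].
Qed.

Definition compof (V : finType) (m : mgraph V) (X : {set V}) x :=
  [set y | connect (restr m (~: X)) x y].

Lemma compof_mem (V : finType) (m : mgraph V) (X : {set V}) x : x \in compof m X x.
Proof. by rewrite inE connect0. Qed.

Lemma compof_comp (V : finType) (m : mgraph V) (X : {set V}) x :
  is_mgraph m -> x \notin X -> is_comp m X (compof m X x).
Proof.
move=> G xX.
set K := compof m X x.
have notX : forall y, y \in K -> y \notin X.
  move=> y; rewrite inE => /connectP[p pp ->].
  case/lastP: p pp => // q z pp.
  have := path_restr_all pp; rewrite last_rcons all_rcons => /andP[].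
  by rewrite inE.
have stepK : forall a b, a \in K -> restr m (~: X) a b -> b \in K.
  by move=> a b; rewrite !inE => xa ab; apply: connect_trans xa (connect1 ab).
have toK : forall a p, a \in K -> path (restr m (~: X)) a p -> path (restr m K) a p.
  move=> a p; elim: p a => //= b p IH a aK /andP[ab pp].
  have bK := stepK _ _ aK ab.
  by rewrite /restr aK bK (IH b bK pp) andbT; case/and3P: ab.
have symK : symmetric (restr m K).
  by move=> a b; rewrite /restr (adj_sym G a b); case: (a \in K); case: (b \in K).
split.
- by apply/set0Pn; exists x; exact: compof_mem.
- by rewrite disjoint_subset; apply/subsetP => y /notX; rewrite inE.
- apply/forallP => y; apply/implyP => yK; apply/forallP => z; apply/implyP => zK.
  have cxz : forall w, w \in K -> connect (restr m K) x w.
    move=> w; rewrite inE => /connectP[p pp ->].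
    by apply/connectP; exists p => //; apply: toK pp; exact: compof_mem.
  apply: connect_trans (cxz z zK).
  by rewrite (sym_connect_sym symK); exact: cxz.
- move=> a b aK bK bX; apply/negP => ab.
  have aX := notX _ aK.
  move/negP: bK; apply; apply: stepK aK _.
  by rewrite /restr !inE ab bX aX.
Qed.

Lemma agree_sub (V : finType) (m m' : mgraph V) (S T : {set V}) :
  agree m m' S -> {subset T <= S} -> agree m m' T.
Proof. by move=> ag TS x y xT yT; apply: ag; apply: TS. Qed.

Lemma agree_sym (V : finType) (m m' : mgraph V) S :
  agree m m' S -> agree m' m S.
Proof. by move=> ag x y xS yS; rewrite ag. Qed.

Lemma connected_agree (V : finType) (m m' : mgraph V) S :
  agree m m' S -> connected_set m S -> connected_set m' S.
Proof.
move=> ag cS.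
have e : restr m S =2 restr m' S.
  move=> x y; rewrite /restr; case xS: (x \in S); case yS: (y \in S) => //=.
  by rewrite /adj ag.
apply/forallP => x; apply/implyP => xS; apply/forallP => y; apply/implyP => yS.
by rewrite -(eq_connect e); exact: conn_get.
Qed.

Lemma tree_agree (V : finType) (m m' : mgraph V) S :
  agree m m' S -> induces_tree m S -> induces_tree m' S.
Proof.
move=> ag [ne [cS nc]]; split => //; split; first exact: connected_agree cS.
by move=> [c cc]; apply: nc; exists c; apply: is_cycle_agree cc; apply: agree_sym.
Qed.

Lemma clique_agree (V : finType) (m m' : mgraph V) S :
  agree m m' S -> induces_clique m S -> induces_clique m' S.
Proof. by move=> ag cl x y xS yS xy; rewrite -ag // cl. Qed.

Lemma feasible_agree (V : finType) (m m' : mgraph V) k (X : {set V}) :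
  agree m m' (~: X) -> feasible m k X -> feasible m' k X.
Proof.
move=> ag [cX H]; split => // C cC.
have CX : forall y, y \in C -> y \in ~: X by move=> y yC; rewrite inE; exact: comp_notX cC yC.
have agC := agree_sub ag CX.
have cC' : is_comp m X C.
  case: cC => ne d cn bd; split => //.
    by apply: connected_agree cn; apply: agree_sym.
  move=> x y xC yC yX; have yX' : y \in ~: X by rewrite inE.
  rewrite /adj ag; [exact: (bd x y xC yC yX) | exact: CX | exact: yX'].
case: (H C cC') => [cl|tr]; [left; exact: clique_agree cl | right; exact: tree_agree tr].
Qed.

Section Mod. End Mod.

Lemma mod_nv (V : finType) (m : mgraph V) v (C' : {set {set V}}) (B' : {set V}) x y :
  x != v -> y != v -> modify m v C' B' x y = m x y.
Proof. by move=> /negbTE xv /negbTE yv; rewrite /modify xv yv. Qed.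

Lemma mod_out (V : finType) (m : mgraph V) v (C' : {set {set V}}) (B' : {set V}) x y :
  x \notin \bigcup_(C in C') C -> y \notin \bigcup_(C in C') C ->
  x \notin B' -> y \notin B' -> modify m v C' B' x y = m x y.
Proof.
by move=> /negbTE a /negbTE b /negbTE c /negbTE d; rewrite /modify a b c d !andbF.
Qed.

Lemma mod_U (V : finType) (m : mgraph V) v (C' : {set {set V}}) (B' : {set V}) x :
  x \in \bigcup_(C in C') C -> modify m v C' B' v x = 0 /\ modify m v C' B' x v = 0.
Proof. by move=> xU; rewrite /modify xU eqxx /= orbT. Qed.

Lemma mod_B (V : finType) (m : mgraph V) v (C' : {set {set V}}) (B' : {set V}) x :
  x \in B' -> x \notin \bigcup_(C in C') C -> v \notin \bigcup_(C in C') C ->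
  modify m v C' B' v x = m v x + 2.
Proof.
move=> xB /negbTE xU /negbTE vU; rewrite /modify xU vU eqxx xB /= !andbF.
by [].
Qed.

Lemma mod_mgraph (V : finType) (m : mgraph V) v (C' : {set {set V}}) (B' : {set V}) :
  is_mgraph m -> v \notin \bigcup_(C in C') C -> v \notin B' ->
  is_mgraph (modify m v C' B').
Proof.
move=> [sm lm] vU vB; split.
  move=> x y; rewrite /modify sm.
  case: (x == v); case: (y == v); case: (x \in _); case: (y \in _); case: (x \in B'); case: (y \in B') => //.
move=> x; rewrite /modify lm orbb.
case: (eqVneq x v) => [->|xv]; first by rewrite (negbTE vU) (negbTE vB).
by rewrite !andFb.
Qed.

Lemma cyc_build (V : finType) (m : mgraph V) (S : {set V}) v l :
  uniq (v :: l) -> path (adj m) v l -> adj m (last v l) v -> 2 <= size l ->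
  all (fun y => y \in S) (v :: l) -> is_cycle m S (v :: l).
Proof.
move=> u p lv sz a; rewrite /is_cycle u a /=.
case: l u p lv sz a => [|x [|y l]] //= u p lv _ _.
by move: p => /and3P[-> -> pl]; rewrite rcons_path pl lv.
Qed.

Lemma cyc_one (V : finType) (m : mgraph V) (S C : {set V}) v a c :
  connected_set m C -> v \notin C -> a \in C -> c \in C -> a != c ->
  adj m v a -> adj m c v -> {subset C <= S} -> v \in S ->
  exists cy, is_cycle m S cy /\ v \in cy.
Proof.
move=> cC vC aC cCc ac va cv CS vS.
have [p [pp up lp]] := connect_upath (conn_get cC aC cCc).
have pC := path_restr_all pp.
exists (v :: a :: p); split; last by rewrite mem_head.
apply: cyc_build => //.
- rewrite cons_uniq up andbT inE negb_or; apply/andP; split.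
    by apply/negP => /eqP e; move: vC; rewrite e aC.
  by apply/negP => vp; move/allP: pC => /(_ v vp); rewrite (negbTE vC).
- by rewrite /= va (path_restr_adj pp).
- by rewrite /= lp.
- by case: p pp up lp pC => [|z p] //= _ _ e; move: ac; rewrite e eqxx.
- rewrite /= vS (CS a aC) /=; apply/allP => y yp; apply: CS.
  by move/allP: pC; apply.
Qed.

Lemma cyc_two (V : finType) (m : mgraph V) (S C1 C2 : {set V}) v b x1 y1 y2 x2 :
  is_mgraph m ->
  connected_set m C1 -> connected_set m C2 -> [disjoint C1 & C2] ->
  v \notin C1 -> v \notin C2 -> b \notin C1 -> b \notin C2 -> v != b ->
  x1 \in C1 -> y1 \in C1 -> y2 \in C2 -> x2 \in C2 ->
  adj m v x1 -> adj m y1 b -> adj m b y2 -> adj m x2 v ->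
  {subset C1 <= S} -> {subset C2 <= S} -> v \in S -> b \in S ->
  exists cy, is_cycle m S cy /\ v \in cy.
Proof.
move=> G c1 c2 d vC1 vC2 bC1 bC2 vb x1C y1C y2C x2C vx1 y1b by2 x2v S1 S2 vS bS.
have [p [pp up lp]] := connect_upath (conn_get c1 x1C y1C).
have [q [qq uq lq]] := connect_upath (conn_get c2 y2C x2C).
have pC := path_restr_all pp; have qC := path_restr_all qq.
have inC1 : forall z, z \in x1 :: p -> z \in C1.
  by move=> z; rewrite inE => /orP[/eqP->//|]; move/allP: pC; apply.
have inC2 : forall z, z \in y2 :: q -> z \in C2.
  by move=> z; rewrite inE => /orP[/eqP->//|]; move/allP: qC; apply.
have dis : forall z, z \in C1 -> z \in C2 -> False.
  by move=> z z1 z2; move: d; rewrite disjoint_subset => /subsetP/(_ z z1); rewrite inE z2.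
exists (v :: (x1 :: p) ++ b :: y2 :: q); split; last by rewrite mem_head.
apply: cyc_build => //.
- have uq' : uniq (b :: y2 :: q).
    by rewrite cons_uniq uq andbT; apply/negP => /inC2; rewrite (negbTE bC2).
  rewrite cons_uniq cat_uniq up uq' !andbT mem_cat negb_or.
  apply/and3P; split => //; first (apply/andP; split).
  + by apply/negP => /inC1; rewrite (negbTE vC1).
  + rewrite inE negb_or (negbTE vb) /=; apply/negP => /inC2; by rewrite (negbTE vC2).
  + apply/hasPn => z; rewrite inE => /orP[/eqP->|/inC2 zC2].
      by apply/negP => /inC1; rewrite (negbTE bC1).
    by apply/negP => /inC1 zC1; exact: dis zC1 zC2.
- rewrite /= vx1 /= cat_path (path_restr_adj pp) /= lp y1b by2 /=.
  exact: path_restr_adj qq.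
- by rewrite last_cat /= lq.
- by rewrite size_cat /= addnS.
- apply/allP => z; rewrite inE mem_cat inE => /orP[/eqP->//|/orP[/inC1/S1//|]].
  by rewrite inE => /orP[/eqP->//|/inC2/S2].
Qed.

Lemma conn_closed (V : finType) (m : mgraph V) (S : {set V}) (P : pred V) x :
  connected_set m S -> x \in S -> P x ->
  (forall a b, P a -> a \in S -> b \in S -> adj m a b -> P b) ->
  forall y, y \in S -> P y.
Proof.
move=> cS xS Px H y yS.
have /connectP[p pp ->] := conn_get cS xS yS.
have : all (fun z => (z \in S) && P z) (x :: p).
  rewrite /= xS Px /=.
  apply: (path_closed pp); first by rewrite xS.
  by move=> a b /andP[aS Pa] /and3P[_ bS ab]; rewrite bS (H a b).
by move=> /allP /(_ _ (mem_last x p)) /andP[].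
Qed.

Lemma path_andP (T : eqType) (r : rel T) (P : pred T) x p :
  path r x p -> all P p -> path (fun a b => r a b && P b) x p.
Proof.
elim: p x => //= y p IH x /andP[rxy pp] /andP[Py Pp].
by rewrite rxy Py IH.
Qed.

Lemma inj_card (V W : finType) (f : V -> W) (A : {set V}) (B : {set W}) :
  {in A &, injective f} -> (forall x, x \in A -> f x \in B) -> #|A| <= #|B|.
Proof.
move=> inj fAB; rewrite -(card_in_imset inj); apply: subset_leq_card.
by apply/subsetP => y /imsetP[x xA ->]; exact: fAB.
Qed.

Lemma card_fib (V W : finType) (f : V -> W) (A : {set V}) (B : {set W}) n :
  (forall x, x \in A -> f x \in B) ->
  (forall b, b \in B -> #|[set x in A | f x == b]| = n) ->
  #|A| = #|B| * n.
Proof.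
move=> fAB fib.
rewrite -sum1_card (partition_big f (fun b => b \in B)) //=.
rewrite -sum_nat_const; apply: eq_bigr => b bB.
by rewrite sum1dep_card -(fib b bB); apply: eq_card => x; rewrite !inE.
Qed.

Lemma ct_facts (V : finType) (m : mgraph V) v (B : {set V}) (Ctree : {set {set V}}) C :
  (forall C, C \in Ctree <-> in_Ctree m v B C) -> C \in Ctree ->
  [/\ is_comp m (v |: B) C, induces_tree m C, v \notin C & forall b, b \in B -> b \notin C].
Proof.
move=> H /H [cC _ tC]; split => //.
  by apply/negP => vC; have := comp_notX cC vC; rewrite !inE eqxx.
by move=> b bB; apply/negP => bC; move: (comp_notX cC bC); rewrite !inE bB orbT.
Qed.

Lemma one_nbr (V : finType) (m : mgraph V) v (B : {set V}) (Ctree : {set {set V}}) C a c :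
  is_mgraph m -> v \notin B ->
  ~ (exists c, is_cycle m (~: B) c /\ v \in c) ->
  (forall C, C \in Ctree <-> in_Ctree m v B C) -> C \in Ctree ->
  a \in C -> c \in C -> adj m v a -> adj m v c -> a = c.
Proof.
move=> G vB noc HCt CC aC cC va vc.
have [cmp tr vC BC] := ct_facts HCt CC.
apply/eqP/negPn/negP => ac; apply: noc.
apply: (cyc_one (S := ~: B) (proj1 (proj2 tr)) vC aC cC ac va).
- by rewrite adj_sym.
- by move=> y yC; rewrite inE; apply/negP => yB; move: (BC y yB); rewrite yC.
- by rewrite inE.
Qed.

Lemma nbhdU_bound (V : finType) (m : mgraph V) v (B : {set V}) (Ctree : {set {set V}})
    (B' : {set V}) (C' : {set {set V}}) (f : {set V} -> V) :
  is_mgraph m -> v \notin B ->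
  ~ (exists c, is_cycle m (~: B) c /\ v \in c) ->
  (forall C, C \in Ctree <-> in_Ctree m v B C) -> C' \subset Ctree ->
  (forall C, C \in C' -> f C \in B') ->
  (forall b, b \in B' -> #|[set C in C' | f C == b]| = 2) ->
  #|nbhd m v :&: \bigcup_(C in C') C| <= 2 * #|B'|.
Proof.
move=> G vB noc HCt C'C fB fib.
have -> : 2 * #|B'| = #|C'| by rewrite mulnC (card_fib fB fib).
pose g y := odflt set0 [pick C in C' | y \in C].
have gP : forall y, y \in \bigcup_(C in C') C -> g y \in C' /\ y \in g y.
  move=> y /bigcupP[C CC yC]; rewrite /g; case: pickP => [D /andP[]|] //=.
  by move=> /(_ C); rewrite CC yC.
apply: (inj_card (f := g)).
  move=> y1 y2; rewrite !inE => /andP[v1 U1] /andP[v2 U2] e.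
  have [gC1 y1g] := gP _ U1; have [_ y2g] := gP _ U2.
  rewrite e in y1g gC1.
  exact: (one_nbr G vB noc HCt (subsetP C'C _ gC1) y1g y2g).
by move=> y; rewrite inE => /andP[_ /gP[]].
Qed.

Lemma forward (V : finType) (m : mgraph V) (k : nat) (v : V)
    (B : {set V}) (Ctree : {set {set V}}) (B' : {set V})
    (C' : {set {set V}}) (f : {set V} -> V) :
  is_mgraph m -> v \notin B ->
  (forall C, C \in Ctree <-> in_Ctree m v B C) ->
  B' \subset B -> C' \subset Ctree ->
  (forall C x b, C \in C' -> x \in C -> b \in B -> adj m x b -> b \in B') ->
  (forall C, C \in C' -> f C \in B' /\ exists x, x \in C /\ adj m (f C) x) ->
  (forall b, b \in B' -> #|[set C in C' | f C == b]| = 2) ->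
  yes_instance m k -> yes_instance (modify m v C' B') k.
Proof.
move=> G vB HCt B'B C'C Ha Hf fib [X feasX].
set U := \bigcup_(C in C') C.
set m' := modify m v C' B'.
have CtC : forall C, C \in C' -> C \in Ctree by move=> C; apply: (subsetP C'C).
have vU : v \notin U.
  by apply/bigcupP => -[C CC vC]; have [_ _ vC' _] := ct_facts HCt (CtC C CC); rewrite vC in vC'.
have B'U : forall b, b \in B' -> b \notin U.
  move=> b bB'; apply/bigcupP => -[C CC bC].
  have [_ _ _ BC] := ct_facts HCt (CtC C CC).
  by move: (BC b (subsetP B'B b bB')); rewrite bC.
case: (boolP (v \in X)) => vX.
  exists X; apply: feasible_agree feasX => x y.
  rewrite !inE => xX yX; rewrite /m' mod_nv //.
  - by apply/negP => /eqP e; rewrite e vX in xX.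
  - by apply/negP => /eqP e; rewrite e vX in yX.
have hit : forall b, b \in B' -> b \notin X ->
    exists C, [/\ C \in C', f C = b & exists y, y \in C /\ y \in X].
  move=> b bB' bX.
  case: (boolP [exists C, (C \in C') && (f C == b) && [exists y, (y \in C) && (y \in X)]]).
    move=> /existsP[C /andP[/andP[CC /eqP fC] /existsP[y /andP[yC yX]]]].
    by exists C; split => //; exists y.
  move=> nex; exfalso.
  have dis : forall C, C \in C' -> f C = b -> forall y, y \in C -> y \notin X.
    move=> C CC fC y yC; apply/negP => yX; move/negP: nex; apply.
    by apply/existsP; exists C; rewrite CC fC eqxx /=; apply/existsP; exists y; rewrite yC.
  have /eqP/cards2P[C1 [C2 [C12 eP]]] := fib b bB'.
  have C1i : C1 \in [set C in C' | f C == b] by rewrite eP !inE eqxx.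
  have C2i : C2 \in [set C in C' | f C == b] by rewrite eP !inE eqxx orbT.
  move: C1i C2i; rewrite !inE => /andP[C1C /eqP f1] /andP[C2C /eqP f2].
  have [cmp1 tr1 vC1 BC1] := ct_facts HCt (CtC _ C1C).
  have [cmp2 tr2 vC2 BC2] := ct_facts HCt (CtC _ C2C).
  have [_ [y1 [y1C by1]]] := Hf C1 C1C; rewrite f1 in by1.
  have [_ [y2 [y2C by2]]] := Hf C2 C2C; rewrite f2 in by2.
  have [_ [x1 [x1C vx1]] _] := (proj1 (HCt C1) (CtC _ C1C)).
  have [_ [x2 [x2C vx2]] _] := (proj1 (HCt C2) (CtC _ C2C)).
  have bB : b \in B by apply: (subsetP B'B).
  have d12 : forall z, z \in C1 -> z \in C2 -> False.
    by move=> z z1 z2; move/eqP: C12; apply; apply: comp_unique cmp1 cmp2 z1 z2.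
  set E := compof m X v.
  have cE := compof_comp G vX.
  have vE : v \in E := compof_mem m X v.
  have x1E : x1 \in E by apply: comp_step cE vE vx1 (dis _ C1C f1 _ x1C).
  have x2E : x2 \in E by apply: comp_step cE vE vx2 (dis _ C2C f2 _ x2C).
  have C1E : {subset C1 <= E}.
    by apply: (comp_sub cE (dis _ C1C f1) _ x1C x1E); case: cmp1.
  have C2E : {subset C2 <= E}.
    by apply: (comp_sub cE (dis _ C2C f2) _ x2C x2E); case: cmp2.
  have bE : b \in E by apply: comp_step cE (C1E _ y1C) _ bX; rewrite adj_sym.
  have [_ HX] := feasX.
  case: (HX E cE) => [cl | [_ [_ nc]]].
    have x12 : x1 != x2 by apply/negP => /eqP e; rewrite -e in x2C; exact: d12 x1C x2C.
    have := cl x1 x2 x1E x2E x12.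
    case: cmp1 => _ _ _ bd.
    have x2C1 : x2 \notin C1 by apply/negP => z1; exact: d12 z1 x2C.
    have := bd x1 x2 x1C x2C1 (comp_notX cmp2 x2C).
    by rewrite /adj => /negP; case: (m x1 x2).
  apply: nc.
  have dC : [disjoint C1 & C2].
    by rewrite disjoint_subset; apply/subsetP => z z1; rewrite inE; apply/negP => z2; exact: d12 z1 z2.
  have vb : v != b by apply/negP => /eqP e; rewrite e bB in vB.
  have [cy [cyc _]] := cyc_two (S := E) G (proj1 (proj2 tr1)) (proj1 (proj2 tr2))
    dC vC1 vC2 (BC1 _ bB) (BC2 _ bB) vb x1C y1C y2C x2C vx1
    (etrans (adj_sym G _ _) by1) by2 (etrans (adj_sym G _ _) vx2) C1E C2E vE bE.
  by exists cy.
have [cardX HX] := feasX.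
set X' := (X :\: U) :|: B'.
exists X'; split.
  pose h b := odflt b [pick y | (y \in X) && [exists C, (C \in C') && (f C == b) && (y \in C)]].
  have hP : forall b, b \in B' :\: X ->
      h b \in X /\ exists C, [/\ C \in C', f C = b & h b \in C].
    move=> b; rewrite inE => /andP[bX bB']; rewrite /h; case: pickP => /=.
      move=> y /andP[yX /existsP[C /andP[/andP[CC /eqP fC] yC]]].
      by split => //; exists C.
    have [C [CC fC [y [yC yX]]]] := hit b bB' bX.
    by move=> /(_ y) /negbT; rewrite yX /= => /existsPn /(_ C); rewrite CC fC eqxx yC.
  have c1 : #|B' :\: X| <= #|X :&: U|.
    apply: (inj_card (f := h)).
      move=> b1 b2 b1i b2i e.
      have [_ [C1 [C1C f1 h1]]] := hP b1 b1i.
      have [_ [C2 [C2C f2 h2]]] := hP b2 b2i.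
      have [cmp1 _ _ _] := ct_facts HCt (CtC _ C1C).
      have [cmp2 _ _ _] := ct_facts HCt (CtC _ C2C).
      rewrite e in h1.
      by rewrite -f1 -f2 (comp_unique cmp1 cmp2 h1 h2).
    move=> b bi; have [hX [C [CC _ hC]]] := hP b bi.
    by rewrite inE hX; apply/bigcupP; exists C.
  have sub : X' \subset (X :\: U) :|: (B' :\: X).
    apply/subsetP => y; rewrite !inE => /orP[->//|yB'].
    case: (boolP (y \in X)) => yX; last by rewrite yB' orbT.
    by rewrite (negbTE (B'U y yB')).
  apply: leq_trans (subset_leq_card sub) _.
  apply: leq_trans (leq_card_setU _ _) _.
  apply: leq_trans cardX.
  by rewrite -(cardsID U X) addnC leq_add2r.
move=> D cD.
have DX' : forall y, y \in D -> y \notin X' by move=> y; apply: comp_notX cD.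
have [Dne _ cnD bdD] := cD.
case: (boolP [exists x, (x \in D) && (x \in U)]).
  move=> /existsP[x /andP[xD /bigcupP[C CC xC]]].
  have [cmp tr vC BC] := ct_facts HCt (CtC _ CC).
  have DC : forall y, y \in D -> y \in C.
    apply: (@conn_closed _ _ _ (fun y => y \in C) _ cnD xD xC) => w z wC wD zD wz.
    apply/negPn/negP => zC.
    have wv : w != v by apply/negP => /eqP e; move: wC; rewrite e (negbTE vC).
    have wU : w \in U by apply/bigcupP; exists C.
    case: (eqVneq z v) => [ezv | zv].
      by move: wz; rewrite /adj ezv /m'; have [_ ->] := mod_U m v B' wU.
    move: wz; rewrite /adj /m' mod_nv // => wz.
    case: cmp => _ _ _ bd.
    case: (boolP (z \in v |: B)) => zvB; last by move: (bd w z wC zC zvB); rewrite /adj wz.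
    move: zvB; rewrite !inE (negbTE zv) /= => zB.
    have zB' := Ha C w z CC wC zB wz.
    by move: (DX' z zD); rewrite !inE zB' orbT.
  right; split => //; split => //.
  move=> [c cc]; have [_ [_ nc]] := tr; apply: nc; exists c.
  have ag : agree m' m D.
    move=> x1 y1 x1D y1D; rewrite /m' mod_nv //.
    - by apply/negP => /eqP e; move: (DC _ x1D); rewrite e (negbTE vC).
    - by apply/negP => /eqP e; move: (DC _ y1D); rewrite e (negbTE vC).
  apply: is_cycle_sub (is_cycle_agree ag cc) _.
  by apply/allP => y /(allP (is_cycle_all cc)); apply: DC.
move=> nex.
have DU : forall y, y \in D -> y \notin U.
  by move=> y yD; apply/negP => yU; move/negP: nex; apply; apply/existsP; exists y; rewrite yD.
have DB' : forall y, y \in D -> y \notin B'.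
  by move=> y /DX'; rewrite !inE negb_or => /andP[_ ->].
have DX : forall y, y \in D -> y \notin X.
  by move=> y yD; move: (DX' y yD) (DU y yD); rewrite !inE negb_or => /andP[/nandP[/negPn->|->]] //.
have agD : agree m' m D.
  by move=> x1 y1 x1D y1D; rewrite /m' mod_out ?DU ?DB'.
have [x xD] := set0Pn _ Dne.
set E := compof m X x.
have cE := compof_comp G (DX x xD).
have DE : forall y, y \in D -> y \in E.
  apply: (@conn_closed _ _ _ (fun y => y \in E) _ cnD xD (compof_mem m X x)) => w z wE wD zD wz.
  by apply: comp_step cE wE _ (DX z zD); rewrite /adj -agD.
case: (HX E cE) => [cl | [_ [_ nc]]].
  by left => x1 y1 x1D y1D xy; rewrite agD // cl // DE.
right; split => //; split => //.
move=> [c cc]; apply: nc; exists c.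
apply: is_cycle_sub (is_cycle_agree agD cc) _.
by apply/allP => y /(allP (is_cycle_all cc)); apply: DE.
Qed.

Lemma backward (V : finType) (m : mgraph V) (k : nat) (v : V)
    (B : {set V}) (Ctree : {set {set V}}) (B' : {set V})
    (C' : {set {set V}}) (f : {set V} -> V) :
  is_mgraph m -> 7 * k < #|nbhd m v| ->
  v \notin B -> #|B| <= 2 * k ->
  ~ (exists c, is_cycle m (~: B) c /\ v \in c) ->
  (forall C, C \in Ctree <-> in_Ctree m v B C) ->
  B' \subset B -> C' \subset Ctree -> B' != set0 -> #|B'| <= k ->
  (forall C x b, C \in C' -> x \in C -> b \in B -> adj m x b -> b \in B') ->
  (forall C, C \in C' -> f C \in B' /\ exists x, x \in C /\ adj m (f C) x) ->
  (forall b, b \in B' -> #|[set C in C' | f C == b]| = 2) ->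
  yes_instance (modify m v C' B') k -> yes_instance m k.
Proof.
move=> G LS vB Bk noc HCt B'B C'C B'ne B'k Ha Hf fib [X' feasX'].
set U := \bigcup_(C in C') C.
set m' := modify m v C' B'.
have CtC : forall C, C \in C' -> C \in Ctree by move=> C; apply: (subsetP C'C).
have vU : v \notin U.
  by apply/bigcupP => -[C CC vC]; have [_ _ vC' _] := ct_facts HCt (CtC C CC); rewrite vC in vC'.
have B'U : forall b, b \in B' -> b \notin U.
  move=> b bB'; apply/bigcupP => -[C CC bC].
  have [_ _ _ BC] := ct_facts HCt (CtC C CC).
  by move: (BC b (subsetP B'B b bB')); rewrite bC.
have vB' : v \notin B' by apply/negP => /(subsetP B'B); rewrite (negbTE vB).
have G' : is_mgraph m' by apply: mod_mgraph.
case: (boolP (v \in X')) => vX.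
  exists X'; apply: feasible_agree feasX' => x y.
  rewrite !inE => xX yX; rewrite /m' mod_nv //.
  - by apply/negP => /eqP e; rewrite e vX in xX.
  - by apply/negP => /eqP e; rewrite e vX in yX.
have [cardX HX] := feasX'.
set E := compof m' X' v.
have cE : is_comp m' X' E := compof_comp G' vX.
have vE : v \in E := compof_mem m' X' v.
have B'X : forall b, b \in B' -> b \in X'.
  move=> b bB'; apply/negPn/negP => bX.
  have mvb : m' v b = m v b + 2 by rewrite /m' (mod_B m bB' (B'U _ bB') vU).
  have bE : b \in E by apply: comp_step cE vE _ bX; rewrite /adj mvb addn2.
  have vb : v != b by apply/negP => /eqP e; rewrite e bB' in vB'.
  case: (HX E cE) => [cl | [_ [_ nc]]].
    by move: (cl v b vE bE vb); rewrite /m' in mvb; rewrite mvb addn2.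
  apply: nc; exists [:: v; b]; rewrite /is_cycle /= inE vb vE bE; rewrite /m' in mvb; rewrite mvb addn2 /=.
  by rewrite ltnS ltnS leq0n.
have k1 : 0 < #|B'| by rewrite card_gt0.
have notcl : ~ induces_clique m' E.
  move=> cl.
  set A := [set u in nbhd m' v | (u \notin X') && (u \notin B)].
  have A1 : #|A| <= 1.
    rewrite leqNgt; apply/negP => /card_gt1P[a [c [aA cA ac]]].
    move: aA cA; rewrite !inE => /and3P[va aX aB] /and3P[vc cX cB].
    have aE : a \in E by apply: comp_step cE vE va aX.
    have cE' : c \in E by apply: comp_step cE vE vc cX.
    have av : a != v by apply/negP => /eqP e; move: va; rewrite e (adj_irr G').
    have cv : c != v by apply/negP => /eqP e; move: vc; rewrite e (adj_irr G').
    have acm : adj m a c by move: (cl a c aE cE' ac); rewrite /m' mod_nv // /adj => ->.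
    have nvU : forall u, adj m' v u -> u \notin U.
      by move=> u vu; apply/negP => uU; move: vu; rewrite /adj /m'; have [-> _] := mod_U m v B' uU.
    have nvB' : forall u, u \notin B -> u \notin B'.
      by move=> u uB; apply/negP => /(subsetP B'B); rewrite (negbTE uB).
    have vam : adj m v a by have := va; rewrite /adj /m' (mod_out m v vU (nvU a va) vB' (nvB' a aB)).
    have vcm : adj m v c by have := vc; rewrite /adj /m' (mod_out m v vU (nvU c vc) vB' (nvB' c cB)).
    apply: noc; exists [:: v; a; c]; split; last by rewrite mem_head.
    apply: cyc_build => //.
    - by rewrite /= !inE negb_or eq_sym av eq_sym cv ac.
    - by rewrite /= vam acm.
    - by rewrite /= adj_sym.
    - by rewrite /= !inE vB aB cB.
  have Nsub : nbhd m v \subset ((A :|: X') :|: B) :|: (nbhd m v :&: U).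
    apply/subsetP => u uN.
    case: (boolP (u \in U)) => uU; first by rewrite !inE uU andbT; rewrite inE in uN; rewrite uN !orbT.
    case: (boolP (u \in X')) => uX; first by rewrite !inE uX orbT.
    case: (boolP (u \in B)) => uB; first by rewrite !inE uB !orbT.
    have uB' : u \notin B' by apply/negP => /(subsetP B'B); rewrite (negbTE uB).
    rewrite !inE uX uB /=; apply/orP; left; apply/orP; left; apply/orP; left.
    by rewrite andbT; have := uN; rewrite inE /adj /m' (mod_out m v vU uU vB' uB').
  have NU := nbhdU_bound (f := f) G vB noc HCt C'C (fun C CC => proj1 (Hf C CC)) fib.
  have := subset_leq_card Nsub.
  rewrite -/U in NU.
  have c1 := (leq_card_setU (A :|: X' :|: B) (nbhd m v :&: U)).1.
  have c2 := (leq_card_setU (A :|: X') B).1.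
  have c3 := (leq_card_setU A X').1.
  lia.
have [Ene [cnE ncE]] : induces_tree m' E by case: (HX E cE) => // /notcl.
exists X'; split => // D cD.
have DX' : forall y, y \in D -> y \notin X' by move=> y; apply: comp_notX cD.
have DB' : forall y, y \in D -> y \notin B'.
  by move=> y yD; apply/negP => /B'X; rewrite (negbTE (DX' y yD)).
have [Dne disD cnD bdD] := cD.
case: (boolP (v \in D)) => vD; last first.
  have Dv : forall y, y \in D -> y != v by move=> y yD; apply/negP => /eqP e; rewrite -e yD in vD.
  have agD : agree m m' D by move=> x y xD yD; rewrite /m' mod_nv // Dv.
  have cD' : is_comp m' X' D.
    split => //; first exact: connected_agree cnD.
    move=> x y xD yD yX; apply/negP => xy.
    case: (eqVneq y v) => [eyv | yv].
      rewrite eyv in xy.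
      case: (boolP (x \in U)) => xU.
        by move: xy; rewrite /adj /m'; have [_ ->] := mod_U m v B' xU.
      have := xy; rewrite /adj /m' (mod_out m v xU vU (DB' x xD) vB') => xvm.
      by move: (bdD x v xD vD vX); rewrite /adj xvm.
    have := xy; rewrite /adj /m' (mod_nv m C' B' (Dv x xD) yv) => xym.
    by move: (bdD x y xD yD yX); rewrite /adj xym.
  case: (HX D cD') => [cl | tr].
    by left; apply: clique_agree cl; apply: agree_sym.
  by right; apply: tree_agree tr; apply: agree_sym.
have inv1 : forall C, C \in C' -> forall a b, a \in D -> b \in D -> b != v ->
    adj m a b -> a \in C -> b \in C.
  move=> C CC a b aD bD bv ab aC; apply/negPn/negP => bC.
  have [[_ _ _ bd] _ _ _] := ct_facts HCt (CtC _ CC).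
  case: (boolP (b \in v |: B)) => bvB; last by move: (bd a b aC bC bvB); rewrite ab.
  move: bvB; rewrite !inE (negbTE bv) /= => bB.
  by move: (DB' b bD); rewrite (Ha C a b CC aC bB ab).
have inv : forall C, C \in C' -> forall a b, (a \in D) && (a != v) -> (b \in D) && (b != v) ->
    adj m a b -> (a \in C) = (b \in C).
  move=> C CC a b /andP[aD av] /andP[bD bv] ab; apply/idP/idP.
    exact: (inv1 C CC a b aD bD bv ab).
  by apply: (inv1 C CC b a bD aD av); rewrite adj_sym.
have DUE : forall y, y \in D -> y \notin U -> y \in E.
  move=> y yD yU.
  have [p [pp up lp]] := connect_upath (conn_get cnD vD yD).
  have pD := path_restr_all pp.
  have pnv : v \notin p by move: up; rewrite cons_uniq => /andP[].
  have pU : all (fun z => z \notin U) p.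
    apply/allP => w wp; apply/negP => /bigcupP[C CC wC].
    move: yU; rewrite -lp.
    case: p pp up lp pD pnv wp => [//|z0 p'] pp up lp pD pnv wp.
    move: pp => /= /andP[_ pp]; have pa := path_restr_adj pp.
    have Qa : all (fun y => (y \in D) && (y != v)) (z0 :: p').
      apply/allP => u up'; move/allP: pD => /(_ u up') ->.
      by apply/negP => /eqP e; rewrite -e up' in pnv.
    have := path_same pa Qa (inv C CC) => /allP same.
    have Pz0 : z0 \in C.
      move: wp; rewrite inE => /orP[/eqP <- //|wp'].
      by move: (same w wp') => /eqP <-.
    move=> /= /negP lU; apply: lU; apply/bigcupP; exists C => //.
    have := mem_last z0 p'; rewrite inE => /orP[/eqP -> //|lp'].
    by move: (same _ lp') => /eqP ->.
  have := path_andP pp pU => pp'.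
  have : all (fun z => (z \in E) && (z \notin U)) p.
    apply: (path_closed pp'); first by rewrite vE vU.
    move=> a b /andP[aE aU] /andP[/and3P[aD bD ab] bU]; rewrite bU andbT.
    apply: comp_step cE aE _ (DX' b bD).
    by rewrite /adj /m' (mod_out m v aU bU (DB' a aD) (DB' b bD)).
  move=> allE; have := mem_last v p; rewrite lp inE => /orP[/eqP -> //|yp].
  by move/allP: allE => /(_ y yp) /andP[].
right; split => //; split => //.
move=> [c cc].
have cyc := is_cycle_cyc G cc.
have cDa := is_cycle_all cc.
have uc : uniq c by case/and3P: cc.
case: (boolP (has (fun z => z \in U) c)); last first.
  move=> /hasPn cU.
  set S := [set y in D | y \notin U].
  have ccS : is_cycle m S c.
    apply: is_cycle_sub cc _; apply/allP => y yc.
    by rewrite inE (allP cDa y yc) cU.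
  have agS : agree m m' S.
    move=> x y; rewrite !inE => /andP[xD xU] /andP[yD yU].
    by rewrite /m' (mod_out m v xU yU (DB' x xD) (DB' y yD)).
  apply: ncE; exists c; apply: is_cycle_sub (is_cycle_agree agS ccS) _.
  by apply/allP => y yc; apply: DUE; [exact: (allP cDa) | exact: cU].
move=> /hasP[z zc /bigcupP[C CC zC]].
have [cmpC trC vC BC] := ct_facts HCt (CtC _ CC).
have zv : z != v by apply/negP => /eqP e; move: zC; rewrite e (negbTE vC).
have allC : forall y, y \in c -> y != v -> y \in C.
  case: (boolP (v \in c)) => vc.
    case: (rot_to vc) => i l eil.
    have cyl : path.cycle (adj m) (v :: l) by rewrite -eil rot_cycle.
    have ul : uniq (v :: l) by rewrite -eil rot_uniq.
    have meml : forall y, (y \in v :: l) = (y \in c) by move=> y; rewrite -eil mem_rot.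
    have zl : z \in l by move: (meml z); rewrite zc inE (negbTE zv).
    case: l eil cyl ul meml zl => [//|z0 l'] eil cyl ul meml zl.
    move: cyl; rewrite /= rcons_path => /and3P[_ pl' _].
    have Qa : all (fun y => (y \in D) && (y != v)) (z0 :: l').
      apply/allP => u ul'; have uc' : u \in c by rewrite -meml inE ul' orbT.
      rewrite (allP cDa u uc') /=; apply/negP => /eqP e.
      by move: ul; rewrite cons_uniq -e ul'.
    have := path_same pl' Qa (inv C CC) => /allP same.
    have Pz0 : z0 \in C.
      move: zl; rewrite inE => /orP[/eqP <- //|zl'].
      by move: (same z zl') => /eqP <-.
    move=> y yc yv; move: yc; rewrite -meml inE (negbTE yv) /= inE => /orP[/eqP -> //|yl'].
    by move: (same y yl') => /eqP ->.
  case: (rot_to zc) => i l eil.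
  have cyl : path.cycle (adj m) (z :: l) by rewrite -eil rot_cycle.
  have meml : forall y, (y \in z :: l) = (y \in c) by move=> y; rewrite -eil mem_rot.
  move: cyl; rewrite /= rcons_path => /andP[pl _].
  have Qa : all (fun y => (y \in D) && (y != v)) (z :: l).
    apply/allP => u ul'; have uc' : u \in c by rewrite -meml.
    rewrite (allP cDa u uc') /=; apply/negP => /eqP e.
    by rewrite -e uc' in vc.
  have := path_same pl Qa (inv C CC) => /allP same.
  move=> y yc yv; move: yc; rewrite -meml inE => /orP[/eqP -> //|yl].
  by move: (same y yl) => /eqP ->.
case: (boolP (v \in c)) => vc.
  apply: noc; exists c; split => //.
  apply: is_cycle_sub cc _; apply/allP => y yc; rewrite inE.
  case: (eqVneq y v) => [-> //|yv].
  by apply/negP => yB; move: (BC y yB); rewrite (allC y yc yv).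
have [_ [_ nc]] := trC; apply: nc; exists c.
apply: is_cycle_sub cc _; apply/allP => y yc.
have yv : y != v by apply/negP => /eqP e; move: yc; rewrite e (negbTE vc).
exact: (allC y yc yv).
Qed.

Theorem mainTheorem9 (V : finType) (m : V -> V -> nat) (k : nat) (v : V)
    (B : {set V}) (Ctree : {set {set V}}) (B' : {set V})
    (C' : {set {set V}}) :
  is_mgraph m ->
  large_sparse m k v ->
  v \notin B -> #|B| <= 2 * k ->
  ~ (exists c, is_cycle m (~: B) c /\ v \in c) ->
  (forall C, C \in Ctree <-> in_Ctree m v B C) ->
  4 * k <= #|Ctree| ->
  (forall C, C \in Ctree -> exists x b, [/\ x \in C, b \in B & adj m x b]) ->
  B' \subset B -> C' \subset Ctree -> B' != set0 -> C' != set0 ->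
  #|B'| <= k ->
  (forall C x b, C \in C' -> x \in C -> b \in B -> adj m x b -> b \in B') ->
  (exists f : {set V} -> V,
      (forall C, C \in C' -> f C \in B' /\ exists x, x \in C /\ adj m (f C) x) /\
      (forall b, b \in B' -> #|[set C in C' | f C == b]| = 2)) ->
  yes_instance m k <-> yes_instance (modify m v C' B') k.
Proof.
move=> G [LS _] vB Bk noc HCt _ _ B'B C'C B'ne _ B'k Ha [f [Hf fib]].
split.
  exact: (forward G vB HCt B'B C'C Ha Hf fib).
exact: (backward G LS vB Bk noc HCt B'B C'C B'ne B'k Ha Hf fib).
Qed.
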